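(* Let $G$ be a finite group and $N\trianglelefteq G$ a normal subgroup. Then: (1) $\operatorname{Ind}_N^G:\operatorname{R}(N)\to\operatorname{R}(G)$ is a monomorphism if and only if $(n)_G=(n)_N$ for every $n\in N$. (2) $\operatorname{Ind}_N^G:\operatorname{RO}(N)\to\operatorname{RO}(G)$ is a monomorphism if and only if $(n)_G^{\pm}=(n)_N^{\pm}$ for every $n\in N$.
   Context: $\operatorname{R}(K)$, $\operatorname{RO}(K)$ are the complex and real representation groups of $K$ (Grothendieck groups of $\mathbb{C}K$-, resp. $\mathbb{R}K$-modules). $(n)_K$ is the conjugacy class of $n$ in $K$, and $(n)_K^{\pm}=(n)_K\cup(n^{-1})_K$ its real conjugacy class in $K$. *)

(* Defs.v *)
From HB Require Import structures.
From mathcomp Require Import all_boot all_order all_algebra all_fingroup all_solvable all_field all_character.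
Set Implicit Arguments. Unset Strict Implicit. Unset Printing Implicit Defensive.
Import Order.TTheory GRing.Theory Num.Theory.
Local Open Scope ring_scope.
Local Open Scope group_scope.

Definition real_repr_char (gT : finGroupType) (H : {group gT}) (phi : 'CF(H)) : Prop :=
  exists (n : nat) (rH : mx_representation algC H n),
    (forall x, x \in H -> forall i j, (rH x i j \is Num.real)%R) /\ cfRepr rH = phi.

(* The image of RO(H) (Grothendieck group of RH-modules) in class functions:
   differences of characters of real representations. *)
Definition RO_vchar (gT : finGroupType) (H : {group gT}) (phi : 'CF(H)) : Prop :=
  exists a b : 'CF(H), [/\ real_repr_char a, real_repr_char b & phi = (a - b)%R].

Definition real_class (gT : finGroupType) (H : {set gT}) (x : gT) : {set gT} :=
  (x ^: H) :|: (x^-1 ^: H).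

(* Main.v *)
Require Import Defs.
From HB Require Import structures.
From mathcomp Require Import all_boot all_order all_algebra all_fingroup all_solvable all_field all_character.
From mathcomp Require Import ring.
Import GRing.Theory Num.Theory.
Local Open Scope group_scope.
Local Open Scope ring_scope.

Lemma ReM_ (x y : algC) : 'Re (x * y) = 'Re x * 'Re y - 'Im x * 'Im y.
Proof.
have -> : x * y = ('Re x * 'Re y - 'Im x * 'Im y) + 'i * ('Re x * 'Im y + 'Im x * 'Re y).
  rewrite {1}[x]Crect {1}[y]Crect.
  have h : 'i * 'i = -1 :> algC := @sqrCi algC.
  set I := 'i; set a := 'Re x; set b := 'Im x; set c := 'Re y; set e := 'Im y.
  transitivity (a * c + (I * I) * b * e + I * (a * e + b * c)); first by ring.
  rewrite h; ring.
by rewrite Re_rect // ?rpredB ?rpredD ?rpredM.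
Qed.

Lemma ImM_ (x y : algC) : 'Im (x * y) = 'Re x * 'Im y + 'Im x * 'Re y.
Proof.
have -> : x * y = ('Re x * 'Re y - 'Im x * 'Im y) + 'i * ('Re x * 'Im y + 'Im x * 'Re y).
  rewrite {1}[x]Crect {1}[y]Crect.
  have h : 'i * 'i = -1 :> algC := @sqrCi algC.
  set I := 'i; set a := 'Re x; set b := 'Im x; set c := 'Re y; set e := 'Im y.
  transitivity (a * c + (I * I) * b * e + I * (a * e + b * c)); first by ring.
  rewrite h; ring.
by rewrite Im_rect // ?rpredB ?rpredD ?rpredM.
Qed.

Definition reM d (A : 'M[algC]_d) : 'M_(d + d) :=
  block_mx (map_mx (@Re _) A) (- map_mx (@Im _) A) (map_mx (@Im _) A) (map_mx (@Re _) A).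

Arguments reM {d}.

Lemma map_Re_mul d (A B : 'M[algC]_d) :
  map_mx (@Re _) (A *m B) = map_mx (@Re _) A *m map_mx (@Re _) B - map_mx (@Im _) A *m map_mx (@Im _) B.
Proof.
apply/matrixP=> i j; rewrite !mxE raddf_sum -sumrB; apply: eq_bigr => k _ /=.
  idtac.
by rewrite ReM_ !mxE.
Qed.

Lemma map_Im_mul d (A B : 'M[algC]_d) :
  map_mx (@Im _) (A *m B) = map_mx (@Re _) A *m map_mx (@Im _) B + map_mx (@Im _) A *m map_mx (@Re _) B.
Proof.
apply/matrixP=> i j; rewrite !mxE raddf_sum -big_split; apply: eq_bigr => k _ /=.
by rewrite ImM_ !mxE.
Qed.

Lemma reMM d (A B : 'M[algC]_d) : reM (A *m B) = reM A *m reM B.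
Proof.
rewrite /reM mulmx_block map_Re_mul map_Im_mul.
rewrite !mulmxN !mulNmx.
by congr block_mx; rewrite ?opprD // addrC.
Qed.

Lemma reM1 d : reM (1%:M : 'M[algC]_d) = 1%:M.
Proof.
rewrite /reM (scalar_mx_block d d 1).
have e1 : map_mx (@Re _) (1%:M : 'M[algC]_d) = 1%:M.
  apply/matrixP=> i j; rewrite !mxE; case: (i == j) => /=; 
  by apply/Creal_ReP; rewrite ?rpred0 ?rpred1.
have e2 : map_mx (@Im _) (1%:M : 'M[algC]_d) = 0.
  apply/matrixP=> i j; rewrite !mxE; case: (i == j) => /=;
  by apply/Creal_ImP; rewrite ?rpred0 ?rpred1.
by rewrite e1 e2 oppr0.
Qed.


Lemma realify {gT : finGroupType} {H : {group gT}} {d} (rG : mx_representation algC H d) :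
  real_repr_char (cfRepr rG + ((cfRepr rG)^*)%CF).
Proof.
have rR : mx_repr H (fun x => reM (rG x)).
  split; first by rewrite repr_mx1 reM1.
  by move=> x y Hx Hy /=; rewrite repr_mxM // reMM.
exists (d + d)%N, (MxRepresentation rR); split.
  move=> x Hx i j /=; rewrite /reM.
  rewrite -[i]splitK -[j]splitK; case: (split i) => i'; case: (split j) => j';
  by rewrite /= ?block_mxEul ?block_mxEur ?block_mxEdl ?block_mxEdr !mxE ?rpredN.
apply/cfun_inP=> x Hx; rewrite !cfunE Hx !mulr1n /= /reM.
rewrite mxtrace_block.
have -> : \tr (map_mx (@Re _) (rG x)) = 'Re (\tr (rG x)).
  by rewrite /mxtrace raddf_sum; apply: eq_bigr => k _; rewrite mxE.
rewrite ReE; set z := (\tr (rG x) + _); by rewrite -mulrDl -mulr2n -[z *+ 2]mulr_natr mulfK // pnatr_eq0.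
Qed.

Lemma indL1 (gT : finGroupType) (G N : {group gT}) (sNG : N \subset G) (D : 'CF(N)) :
  (forall n g, n \in N -> g \in G -> D (n ^ g)%g = D n) -> 'Ind[G, N] D = 0 -> D = 0.
Proof.
move=> inv ID; apply/cfun_inP => n Nn; rewrite cfunE.
have := congr1 (fun f : 'CF(G) => f n) ID; rewrite /= cfunE cfIndE //.
rewrite (eq_bigr (fun _ => D n)) => [|g Gg]; last exact: inv.
rewrite sumr_const => /eqP; rewrite mulf_eq0 invr_eq0 pnatr_eq0 eqn0Ngt cardG_gt0 /= -mulr_natl mulf_eq0 pnatr_eq0 eqn0Ngt cardG_gt0 /=.
by move/eqP.
Qed.

Lemma real_char_inv (gT : finGroupType) (N : {group gT}) (a : 'CF(N)) :
  real_repr_char a -> forall x, a (x^-1)%g = a x.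
Proof.
case=> k [rH [Hr <-]] x; rewrite char_inv ?cfRepr_char //.
apply: conj_Creal; rewrite cfunE; case Nx: (x \in N); last by rewrite mulr0n rpred0.
by rewrite mulr1n /mxtrace rpred_sum // => i _; apply: Hr.
Qed.

Lemma real_repr_char0 (gT : finGroupType) (N : {group gT}) : real_repr_char (0 : 'CF(N)).
Proof. by exists 0%N, (@grepr0 _ _ N); split; [move=> x _ [] | exact: cfRepr0]. Qed.

Theorem mainTheorem3 (gT : finGroupType) (G N : {group gT}) (nNG : N <| G) :
  ( {in 'Z[irr N] &, injective ('Ind[G, N] : 'CF(N) -> 'CF(G))}
      <-> (forall n, n \in N -> (n ^: G)%g = (n ^: N)%g) )
  /\
  ( (forall phi psi : 'CF(N), RO_vchar phi -> RO_vchar psi ->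
        'Ind[G, N] phi = 'Ind[G, N] psi -> phi = psi)
      <-> (forall n, n \in N -> real_class G n = real_class N n) ).
Proof.
have sNG := normal_sub nNG.
have nN : forall g, g \in G -> g \in 'N(N) := fun g Gg => subsetP (normal_norm nNG) g Gg.
have IndJ : forall (phi : 'CF(N)) g, g \in G -> 'Ind[G, N] (phi ^ g)%CF = 'Ind[G, N] phi.
  by move=> phi g Gg; rewrite -(cfConjgInd _ (normal_refl G) nNG Gg) cfConjg_id.
split; split.
- move=> inj n Nn.
  have inv : forall i g, g \in G -> 'chi[N]_i (n ^ g)%g = 'chi_i n.
    move=> i g Gg.
    have e : ('chi_i ^ g)%CF = 'chi_i.
      by apply: inj; rewrite ?irr_vchar ?IndJ // -conjg_IirrE irr_vchar.
    by rewrite -{1}e cfConjgEJ ?nN.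
  pose f : 'CF(N) := '1_(n ^: N).
  have finv : forall g, g \in G -> f (n ^ g)%g = f n.
    move=> g Gg; rewrite (cfun_sum_cfdot f) !sum_cfunE; apply: eq_bigr => i _.
    by rewrite !cfunE inv.
  apply/eqP; rewrite eqEsubset (classS _ sNG) andbT; apply/subsetP=> y /imsetP[g Gg ->].
  have := finv g Gg; rewrite /f !cfun_classE Nn class_refl /=.
  by case: (n ^ g \in n ^: N)%g => // /eqP; rewrite eq_sym oner_eq0.
- move=> H phi psi _ _ e; apply/eqP; rewrite -subr_eq0; apply/eqP; apply: (@indL1 _ G N sNG).
    move=> m g Nm Gg; have : (m ^ g \in m ^: N)%g by rewrite -H // imset_f.
    by case/imsetP=> h Nh ->; rewrite cfunJ.
  by rewrite linearB /= e subrr.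
- move=> inj n Nn.
  have hinv : forall i g, g \in G ->
      'chi[N]_i (n ^ g)%g + ('chi_i (n ^ g)%g)^* = 'chi_i n + ('chi_i n)^*.
    move=> i g Gg; set j := conjg_Iirr i g.
    have RO : forall k : Iirr N, RO_vchar ('chi_k + (('chi_k)^*)%CF).
      move=> k; exists ('chi_k + (('chi_k)^*)%CF), 0; split; last by rewrite subr0.
        by have := realify 'Chi_k; rewrite irrRepr.
      exact: real_repr_char0.
    have e : ('chi_i + (('chi_i)^*)%CF) = ('chi_j + (('chi_j)^*)%CF).
      apply: inj; rewrite ?RO //.
      by rewrite !linearD /= -!cfAutInd conjg_IirrE IndJ.
    have := congr1 (fun f : 'CF(N) => f (n ^ g)%g) e; rewrite /= !cfunE => ->.
    by rewrite conjg_IirrE cfConjgEJ ?nN.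
  pose f : 'CF(N) := '1_(n ^: N) + '1_(n^-1 ^: N).
  have hV : forall x m, (x^-1 \in m^-1 ^: N)%g = (x \in m ^: N)%g.
    by move=> x m; rewrite classVg memV_invg.
  have hV' : forall x m, (x^-1 \in m ^: N)%g = (x \in m^-1 ^: N)%g.
    by move=> x m; rewrite -hV invgK.
  have fV : forall x, f (x^-1)%g = f x.
    by move=> x; rewrite /f !cfunE !cfun_classE groupV hV hV' addrC.
  have f2 : forall y, f y * 2%:R = \sum_i '[f, 'chi_i] * ('chi_i y + ('chi_i y)^*).
    move=> y; rewrite mulr_natr mulr2n -{2}fV {1 2}(cfun_sum_cfdot f) !sum_cfunE -big_split.
    by apply: eq_bigr => i _; rewrite !cfunE char_inv ?irr_char // mulrDr.
  have two : (2%:R : algC) != 0 by rewrite pnatr_eq0.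
  have key : forall g, g \in G -> (n ^ g)%g \in real_class N n.
    move=> g Gg; have : f (n ^ g)%g * 2%:R = f n * 2%:R.
      by rewrite !f2; apply: eq_bigr => i _; rewrite hinv.
    move/(mulIf two); rewrite /f !cfunE !cfun_classE groupV Nn class_refl /= /real_class inE.
    move=> /eqP; rewrite -!natrD eqr_nat.
    by rewrite add1n; case: (n ^ g \in n ^: N)%g; case: (n ^ g \in n^-1 ^: N)%g.
  apply/eqP; rewrite eqEsubset /real_class (setUSS (classS _ sNG) (classS _ sNG)) andbT.
  apply/subsetP=> y; rewrite inE => /orP[] /imsetP[g Gg ->]; first exact: key.
  have := key g Gg; rewrite /real_class !inE conjVg hV hV' orbC.
  by [].
- move=> H phi psi [a [b [Ra Rb ->]]] [c [d [Rc Rd ->]]] eq.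
  have Dinv : forall x, (a - b - (c - d)) (x^-1)%g = (a - b - (c - d)) x.
    by move=> x; rewrite !cfunE !(@real_char_inv _ N).
  apply/eqP; rewrite -subr_eq0; apply/eqP; apply: (@indL1 _ G N sNG); last first.
    by rewrite linearB /= eq subrr.
  move=> m g Nm Gg; have : (m ^ g)%g \in real_class N m.
    by rewrite -H // /real_class inE imset_f.
  rewrite /real_class inE => /orP[] /imsetP[h Nh ->]; first by rewrite cfunJ.
  by rewrite cfunJ // Dinv.
Qed.
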